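(* Let $G$ be the connected group with Lie algebra $\mathbf g=su_2(\mathbb C)\ltimes\mathbb R^3$ described below, $H$ the subgroup $\{(A,0)\}$ with Lie algebra $\mathbf h=\langle X,Y,Z\rangle$, and $\mathbf m_1=\langle V_1+Z,\ V_2+Y,\ V_3-X\rangle$. There is no global almost differentiable strongly left alternative left A-loop with $G$ as group topologically generated by its left translations, $H$ as stabilizer of the identity, and $T_1\sigma(G/H)=\mathbf m_1$.
   Context: $G$ consists of pairs $(A,X)$ with $A\in SU_2(\mathbb C)$ modulo $\pm 1$ and $X=\begin{pmatrix}k&li+n\\-li+n&-k\end{pmatrix}$, $k,l,n\in\mathbb R$, multiplied by $(A_1,X_1)(A_2,X_2)=(A_1A_2,A_2^{-1}X_1A_2+X_2)$. Basis of $\mathbf g$: $X=(\begin{pmatrix}i&0\\0&-i\end{pmatrix},0)$, $Y=(\begin{pmatrix}0&i\\i&0\end{pmatrix},0)$, $Z=(\begin{pmatrix}0&-1\\1&0\end{pmatrix},0)$, $V_1=(0,\begin{pmatrix}0&i\\-i&0\end{pmatrix})$, $V_2=(0,\begin{pmatrix}0&1\\1&0\end{pmatrix})$, $V_3=(0,\begin{pmatrix}-1&0\\0&1\end{pmatrix})$. A loop is a set with a binary operation and two-sided identity $e$ with uniquely solvable left and right division; a left A-loop has every $\lambda_{xy}^{-1}\lambda_x\lambda_y$ an automorphism ($\lambda_a(y)=a\cdot y$). For a connected loop, $G$ is the group topologically generated by left translations, $H$ the stabilizer of $e$, and left translations form the image of a sharply transitive global section $\sigma:G/H\to G$, $\sigma(H)=1$;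 almost differentiable means $G$ Lie and $\sigma$ differentiable; strongly left alternative means $\exp(T_1\sigma(G/H))\subseteq\sigma(G/H)$. *)

(* Defs.v *)
(* Concrete model of G = (SU_2(C)/{+-1}) x| R^3. *)
From Stdlib Require Import Reals.
Open Scope R_scope.

Record C := mkC { re : R; im : R }.
Definition Cadd (z w : C) : C := mkC (re z + re w) (im z + im w).
Definition Cmul (z w : C) : C :=
  mkC (re z * re w - im z * im w) (re z * im w + im z * re w).
Definition Copp (z : C) : C := mkC (- re z) (- im z).
Definition Cconj (z : C) : C := mkC (re z) (- im z).
Definition Cscal (r : R) (z : C) : C := mkC (r * re z) (r * im z).
Definition C0 : C := mkC 0 0.
Definition C1 : C := mkC 1 0.
Definition Ci : C := mkC 0 1.
Definition Cnorm1 (z : C) : R := Rabs (re z) + Rabs (im z).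

Record M2 := mkM { a11 : C; a12 : C; a21 : C; a22 : C }.
Definition Madd (A B : M2) : M2 :=
  mkM (Cadd (a11 A) (a11 B)) (Cadd (a12 A) (a12 B))
      (Cadd (a21 A) (a21 B)) (Cadd (a22 A) (a22 B)).
Definition Mmul (A B : M2) : M2 :=
  mkM (Cadd (Cmul (a11 A) (a11 B)) (Cmul (a12 A) (a21 B)))
      (Cadd (Cmul (a11 A) (a12 B)) (Cmul (a12 A) (a22 B)))
      (Cadd (Cmul (a21 A) (a11 B)) (Cmul (a22 A) (a21 B)))
      (Cadd (Cmul (a21 A) (a12 B)) (Cmul (a22 A) (a22 B))).
Definition Mopp (A : M2) : M2 :=
  mkM (Copp (a11 A)) (Copp (a12 A)) (Copp (a21 A)) (Copp (a22 A)).
Definition Mscal (r : R) (A : M2) : M2 :=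
  mkM (Cscal r (a11 A)) (Cscal r (a12 A)) (Cscal r (a21 A)) (Cscal r (a22 A)).
Definition Madj (A : M2) : M2 :=
  mkM (Cconj (a11 A)) (Cconj (a21 A)) (Cconj (a12 A)) (Cconj (a22 A)).
Definition Mdet (A : M2) : C :=
  Cadd (Cmul (a11 A) (a22 A)) (Copp (Cmul (a12 A) (a21 A))).
Definition Mid : M2 := mkM C1 C0 C0 C1.
Definition Mzero : M2 := mkM C0 C0 C0 C0.
Definition Mnorm1 (A : M2) : R :=
  Cnorm1 (a11 A) + Cnorm1 (a12 A) + Cnorm1 (a21 A) + Cnorm1 (a22 A).

Definition SU2 (A : M2) : Prop := Mmul (Madj A) A = Mid /\ Mdet A = C1.

Definition herm (k l n : R) : M2 :=
  mkM (mkC k 0) (mkC n l) (mkC n (- l)) (mkC (- k) 0).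
Definition isV (X : M2) : Prop := exists k l n, X = herm k l n.

Definition P := (M2 * M2)%type.
Definition padd (u v : P) : P := (Madd (fst u) (fst v), Madd (snd u) (snd v)).
Definition pscal (r : R) (u : P) : P := (Mscal r (fst u), Mscal r (snd u)).
Definition psub (u v : P) : P := padd u (pscal (-1) v).
Definition pnorm (u : P) : R := Mnorm1 (fst u) + Mnorm1 (snd u).

(* Elements of G are pairs (A,X), A in SU_2, taken modulo A ~ -A.
   We work with representatives in P and the relation [geq]. *)
Definition inG (g : P) : Prop := SU2 (fst g) /\ isV (snd g).
(* (A1,X1)(A2,X2) = (A1 A2, A2^{-1} X1 A2 + X2), with A2^{-1} = A2^* *)
Definition gmul (g1 g2 : P) : P :=
  (Mmul (fst g1) (fst g2),
   Madd (Mmul (Mmul (Madj (fst g2)) (snd g1)) (fst g2)) (snd g2)).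
Definition gone : P := (Mid, Mzero).
Definition ginv (g : P) : P :=
  (Madj (fst g), Mopp (Mmul (Mmul (fst g) (snd g)) (Madj (fst g)))).
Definition gneg (g : P) : P := (Mopp (fst g), snd g).
Definition geq (g1 g2 : P) : Prop :=
  (fst g2 = fst g1 \/ fst g2 = Mopp (fst g1)) /\ snd g2 = snd g1.

(* H = {(A,0)} and left cosets gH (H contains -1, so G/H is the same
   whether computed in SU_2 x| R^3 or in its quotient by {+-1}) *)
Definition inH (g : P) : Prop := inG g /\ snd g = Mzero.
Definition sameCoset (g1 g2 : P) : Prop := exists h, inH h /\ g2 = gmul g1 h.

Definition LX : P := (mkM Ci C0 C0 (Copp Ci), Mzero).
Definition LY : P := (mkM C0 Ci Ci C0, Mzero).
Definition LZ : P := (mkM C0 (Copp C1) C1 C0, Mzero).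
Definition LV1 : P := (Mzero, mkM C0 Ci (Copp Ci) C0).
Definition LV2 : P := (Mzero, mkM C0 C1 C1 C0).
Definition LV3 : P := (Mzero, mkM (Copp C1) C0 C0 C1).

Definition m1 (v : P) : Prop :=
  exists al be ga : R,
    v = padd (pscal al (padd LV1 LZ))
             (padd (pscal be (padd LV2 LY)) (pscal ga (psub LV3 LX))).

(* sigma is given as a map on representatives, constant on cosets. *)
Definition image (sigma : P -> P) (s : P) : Prop :=
  exists z, inG z /\ geq (sigma z) s.

Definition section_ok (sigma : P -> P) : Prop :=
  (forall g, inG g -> inG (sigma g)) /\
  (forall g1 g2, inG g1 -> inG g2 -> sameCoset g1 g2 -> geq (sigma g1) (sigma g2)) /\
  (forall g, inG g -> sameCoset g (sigma g)) /\
  geq (sigma gone) gone /\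
  (forall x y, inG x -> inG y ->
     (exists s, image sigma s /\ sameCoset (gmul s x) y) /\
     (forall s s', image sigma s -> image sigma s' ->
        sameCoset (gmul s x) y -> sameCoset (gmul s' x) y -> geq s s')).

Definition lmul (sigma : P -> P) (x y : P) : P := gmul (sigma x) y.

Definition is_loop (sigma : P -> P) : Prop :=
  (forall y, inG y -> sameCoset (lmul sigma gone y) y) /\
  (forall x, inG x -> sameCoset (lmul sigma x gone) x) /\
  (forall a b, inG a -> inG b ->
     (exists y, inG y /\ sameCoset (lmul sigma a y) b) /\
     (forall y y', inG y -> inG y' -> sameCoset (lmul sigma a y) b ->
        sameCoset (lmul sigma a y') b -> sameCoset y y')) /\
  (forall a b, inG a -> inG b ->
     (exists x, inG x /\ sameCoset (lmul sigma x a) b) /\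
     (forall x x', inG x -> inG x' -> sameCoset (lmul sigma x a) b ->
        sameCoset (lmul sigma x' a) b -> sameCoset x x')).

Definition loop_aut (sigma : P -> P) (phi : P -> P) : Prop :=
  (forall z, inG z -> inG (phi z)) /\
  (forall z1 z2, inG z1 -> inG z2 -> sameCoset z1 z2 -> sameCoset (phi z1) (phi z2)) /\
  (forall z1 z2, inG z1 -> inG z2 -> sameCoset (phi z1) (phi z2) -> sameCoset z1 z2) /\
  (forall w, inG w -> exists z, inG z /\ sameCoset (phi z) w) /\
  (forall z1 z2, inG z1 -> inG z2 ->
     sameCoset (phi (lmul sigma z1 z2)) (lmul sigma (phi z1) (phi z2))).

(* left A-loop: lambda_{xy}^{-1} lambda_x lambda_y is an automorphism;
   lambda_a acts as left multiplication by sigma(a), so its inverse is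
   left multiplication by sigma(a)^{-1}. *)
Definition left_A_loop (sigma : P -> P) : Prop :=
  forall x y, inG x -> inG y ->
    loop_aut sigma
      (fun z => gmul (ginv (sigma (lmul sigma x y)))
                     (gmul (sigma x) (gmul (sigma y) z))).

Inductive gen (S : P -> Prop) : P -> Prop :=
| gen_one : gen S gone
| gen_l : forall s g, S s -> gen S g -> gen S (gmul s g)
| gen_li : forall s g, S s -> gen S g -> gen S (gmul (ginv s) g).

Definition top_generates (S : P -> Prop) : Prop :=
  forall g, inG g -> forall eps, eps > 0 ->
    exists h, gen S h /\ (pnorm (psub h g) < eps \/ pnorm (psub (gneg h) g) < eps).

Definition frechet (F : P -> P) (p : P) : Prop :=
  exists L : P -> P,
    (forall u v, L (padd u v) = padd (L u) (L v)) /\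
    (forall r u, L (pscal r u) = pscal r (L u)) /\
    (forall eps, eps > 0 -> exists del, del > 0 /\
       forall h, pnorm h < del ->
         pnorm (psub (psub (F (padd p h)) (F p)) (L h)) <= eps * pnorm h).

(* a map G -> G (here sigma composed with G -> G/H) is differentiable:
   near every point it is (up to the sign ambiguity) the restriction of a
   Frechet-differentiable map defined on an open set of the ambient space *)
Definition diff_on_G (f : P -> P) : Prop :=
  forall g0, inG g0 -> exists (del : R) (F : P -> P), del > 0 /\
    (forall g, pnorm (psub g g0) < del -> frechet F g) /\
    (forall g, inG g -> pnorm (psub g g0) < del -> geq (F g) (f g)).

Definition curve_deriv0 (c : R -> P) (v : P) : Prop :=
  forall eps, eps > 0 -> exists del, del > 0 /\
    forall t, t <> 0 -> Rabs t < del ->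
      pnorm (psub (pscal (/ t) (psub (c t) (c 0))) v) < eps.

Definition tangent_at_one (sigma : P -> P) (v : P) : Prop :=
  exists (c : R -> P) (eps : R), eps > 0 /\ c 0 = gone /\ curve_deriv0 c v /\
    forall t, Rabs t < eps -> inG (c t) /\ image sigma (c t).

(* one-parameter subgroup with initial velocity v; exp v = gamma 1 *)
Definition oneps (gamma : R -> P) (v : P) : Prop :=
  (forall t, inG (gamma t)) /\
  (forall s t, gamma (s + t) = gmul (gamma s) (gamma t)) /\
  curve_deriv0 gamma v.

Definition strongly_left_alternative (sigma : P -> P) : Prop :=
  forall v, tangent_at_one sigma v ->
    forall gamma, oneps gamma v -> image sigma (gamma 1).

(* Main.v *)
Require Import Defs.
From Stdlib Require Import Reals Lra Lia Psatz List.
From Coquelicot Require Import Coquelicot.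
Open Scope R_scope.
Import ListNotations.

Lemma cos2' x : cos x ^ 2 = 1 - sin x ^ 2.
Proof. pose proof (sin2_cos2 x). unfold Rsqr in H. nra. Qed.
Ltac trig := ring_simplify; try rewrite !cos2'; ring.

Definition coords (p : P) : list R :=
  let (A, B) := p in
  [re (a11 A); im (a11 A); re (a12 A); im (a12 A);
   re (a21 A); im (a21 A); re (a22 A); im (a22 A);
   re (a11 B); im (a11 B); re (a12 B); im (a12 B);
   re (a21 B); im (a21 B); re (a22 B); im (a22 B)].
Definition coord (i : nat) (p : P) : R := nth i (coords p) 0.

Lemma coord_sub i (u w v : P) t :
  coord i (psub (pscal (/ t) (psub u w)) v) =
  / t * (coord i u + -1 * coord i w) + -1 * coord i v.
Proof.
  destruct u as [[[? ?] [? ?] [? ?] [? ?]] [[? ?] [? ?] [? ?] [? ?]]].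
  destruct w as [[[? ?] [? ?] [? ?] [? ?]] [[? ?] [? ?] [? ?] [? ?]]].
  destruct v as [[[? ?] [? ?] [? ?] [? ?]] [[? ?] [? ?] [? ?] [? ?]]].
  do 16 (destruct i as [|i]; [reflexivity|]).
  unfold coord; simpl; destruct i; ring.
Qed.

Lemma pnorm_small (u : P) e :
  (forall i, (i < 16)%nat -> Rabs (coord i u) < e) -> pnorm u < 16 * e.
Proof.
  intros H.
  destruct u as [[[? ?] [? ?] [? ?] [? ?]] [[? ?] [? ?] [? ?] [? ?]]].
  pose proof (H 0%nat ltac:(lia)). pose proof (H 1%nat ltac:(lia)).
  pose proof (H 2%nat ltac:(lia)). pose proof (H 3%nat ltac:(lia)).
  pose proof (H 4%nat ltac:(lia)). pose proof (H 5%nat ltac:(lia)).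
  pose proof (H 6%nat ltac:(lia)). pose proof (H 7%nat ltac:(lia)).
  pose proof (H 8%nat ltac:(lia)). pose proof (H 9%nat ltac:(lia)).
  pose proof (H 10%nat ltac:(lia)). pose proof (H 11%nat ltac:(lia)).
  pose proof (H 12%nat ltac:(lia)). pose proof (H 13%nat ltac:(lia)).
  pose proof (H 14%nat ltac:(lia)). pose proof (H 15%nat ltac:(lia)).
  unfold coord in *; simpl in *.
  unfold pnorm, Mnorm1, Cnorm1; simpl. lra.
Qed.

Definition ev0 (Q : R -> Prop) := exists del, del > 0 /\
  forall t, t <> 0 -> Rabs t < del -> Q t.

Lemma ev0_forall n (Q : nat -> R -> Prop) :
  (forall i, (i < n)%nat -> ev0 (Q i)) ->
  ev0 (fun t => forall i, (i < n)%nat -> Q i t).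
Proof.
  induction n; intros H.
  - exists 1; split; [lra|]. intros; lia.
  - destruct IHn as [d1 [Hd1 H1]]. { intros; apply H; lia. }
    destruct (H n ltac:(lia)) as [d2 [Hd2 H2]].
    exists (Rmin d1 d2); split. { apply Rmin_pos; lra. }
    intros t Ht Hl i Hi.
    assert (Rabs t < d1) by (eapply Rlt_le_trans; [exact Hl| apply Rmin_l]).
    assert (Rabs t < d2) by (eapply Rlt_le_trans; [exact Hl| apply Rmin_r]).
    destruct (Nat.eq_dec i n). subst; auto. apply H1; auto; lia.
Qed.

Lemma cd0 (c : R -> P) (v : P) :
  (forall i, (i < 16)%nat -> derivable_pt_lim (fun t => coord i (c t)) 0 (coord i v)) ->
  curve_deriv0 c v.
Proof.
  intros H eps Heps.
  destruct (ev0_forall 16 (fun i t => Rabs (coord i (psub (pscal (/ t) (psub (c t) (c 0))) v)) < eps / 16))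
    as [del [Hdel Hq]].
  { intros i Hi. destruct (H i Hi (eps/16) ltac:(lra)) as [d Hd].
    exists (pos d); split; [apply cond_pos|]. intros t Ht Hl.
    rewrite coord_sub. specialize (Hd t Ht Hl). rewrite Rplus_0_l in Hd.
    replace (/ t * (coord i (c t) + -1 * coord i (c 0)) + -1 * coord i v)
      with ((coord i (c t) - coord i (c 0)) / t - coord i v) by (field; auto).
    exact Hd. }
  exists del; split; auto. intros t Ht Hl.
  replace eps with (16 * (eps/16)) by field. apply pnorm_small. auto.
Qed.
Lemma Ceq (z w : Defs.C) : re z = re w -> im z = im w -> z = w.
Proof. destruct z, w; simpl; intros; subst; auto. Qed.
Lemma Meq (A B : M2) : a11 A = a11 B -> a12 A = a12 B -> a21 A = a21 B -> a22 A = a22 B -> A = B.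
Proof. destruct A, B; simpl; intros; subst; auto. Qed.
Lemma Peq (u w : P) : fst u = fst w -> snd u = snd w -> u = w.
Proof. destruct u, w; simpl; intros; subst; auto. Qed.
Ltac meq := apply Meq; apply Ceq; simpl.
Ltac peq := apply Peq; meq.
Definition g3 (k t : R) : P :=
  (mkM (mkC (cos (k*t)) (- sin (k*t))) C0 C0 (mkC (cos (k*t)) (sin (k*t))),
   herm (- (k*t)) 0 0).
Definition g1 (k t : R) : P :=
  (mkM (mkC (cos (k*t)) 0) (mkC (- sin (k*t)) 0) (mkC (sin (k*t)) 0) (mkC (cos (k*t)) 0),
   herm 0 (k*t) 0).
Definition w3 (k : R) : P :=
  (mkM (mkC 0 (-k)) C0 C0 (mkC 0 k), herm (-k) 0 0).
Definition w1 (k : R) : P :=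
  (mkM C0 (mkC (-k) 0) (mkC k 0) C0, herm 0 k 0).

Ltac dsolve := apply is_derive_Reals; auto_derive; auto;
  rewrite ?Rmult_0_r, ?cos_0, ?sin_0; ring.

Lemma g3_oneps k : oneps (g3 k) (w3 k).
Proof.
  split; [|split].
  - intros t. split; [split|].
    + unfold Mmul, Madj, Mid; simpl. unfold Cadd, Cmul, Cconj, C1, C0; simpl.
      meq; trig.
    + unfold Mdet; simpl. unfold Cadd, Cmul, Copp, C1, C0; simpl. apply Ceq; simpl; trig.
    + eexists _, _, _; reflexivity.
  - intros s t. unfold g3, gmul, herm; simpl.
    rewrite Rmult_plus_distr_l, cos_plus, sin_plus.
    unfold Mmul, Madd, Madj; simpl. unfold Cadd, Cmul, Cconj, C0; simpl.
    peq; trig.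
  - apply cd0. intros i Hi.
    do 16 (destruct i as [|i]; [unfold coord; simpl; dsolve|]). lia.
Qed.

Lemma g1_oneps k : oneps (g1 k) (w1 k).
Proof.
  split; [|split].
  - intros t. split; [split|].
    + unfold Mmul, Madj, Mid; simpl. unfold Cadd, Cmul, Cconj, C1, C0; simpl.
      meq; trig.
    + unfold Mdet; simpl. unfold Cadd, Cmul, Copp, C1, C0; simpl. apply Ceq; simpl; trig.
    + eexists _, _, _; reflexivity.
  - intros s t. unfold g1, gmul, herm; simpl.
    rewrite Rmult_plus_distr_l, cos_plus, sin_plus.
    unfold Mmul, Madd, Madj; simpl. unfold Cadd, Cmul, Cconj, C0; simpl.
    peq; trig.
  - apply cd0. intros i Hi.
    do 16 (destruct i as [|i]; [unfold coord; simpl; dsolve|]). lia.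
Qed.

Theorem proposition23 :
  ~ exists sigma : P -> P,
      section_ok sigma /\
      is_loop sigma /\
      left_A_loop sigma /\
      top_generates (image sigma) /\
      diff_on_G sigma /\
      strongly_left_alternative sigma /\
      (forall v, tangent_at_one sigma v <-> m1 v).
Proof.
  intros [sigma [Hsec [_ [_ [_ [_ [Hsla Htan]]]]]]].
  assert (I3 : image sigma (g3 (PI/2) 1)).
  { apply (Hsla (w3 (PI/2))); [|apply g3_oneps].
    apply Htan. exists 0, 0, (PI/2). unfold w3, herm; peq; ring. }
  assert (I1 : image sigma (g1 (PI/2) 1)).
  { apply (Hsla (w1 (PI/2))); [|apply g1_oneps].
    apply Htan. exists (PI/2), 0, 0. unfold w1, herm; peq; ring. }
  set (x := (Mid, herm (PI/4) (-(PI/4)) 0)).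
  set (y := gmul (g3 (PI/2) 1) x).
  destruct Hsec as [_ [_ [_ [_ Hst]]]].
  assert (Gx : inG x).
  { split; [split|].
    - unfold x; meq; ring.
    - unfold x, Mdet; apply Ceq; simpl; ring.
    - eexists _, _, _; reflexivity. }
  assert (Gy : inG y).
  { unfold y, x, g3; rewrite Rmult_1_r, cos_PI2, sin_PI2.
    split; [split|].
    - meq; ring.
    - unfold Mdet; apply Ceq; simpl; ring.
    - exists (- (PI/2) + PI/4), (-(PI/4)), 0. unfold herm; meq; ring. }
  destruct (Hst x y Gx Gy) as [_ Hu].
  assert (E : geq (g3 (PI/2) 1) (g1 (PI/2) 1)).
  { apply Hu; auto.
    - exists gone. split.
      + split; [split; [split|]|].
        * unfold gone; meq; ring.
        * unfold gone, Mdet; apply Ceq; simpl; ring.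
        * exists 0, 0, 0. unfold gone, herm; meq; ring.
        * reflexivity.
      + unfold y, gone; peq; ring.
    - exists (mkM Defs.C0 Defs.Ci Defs.Ci Defs.C0, Defs.Mzero). split.
      + split; [split; [split|]|].
        * meq; ring.
        * unfold Mdet; apply Ceq; simpl; ring.
        * exists 0, 0, 0. unfold herm; meq; ring.
        * reflexivity.
      + unfold y, x, g3, g1; rewrite !Rmult_1_r, cos_PI2, sin_PI2.
        peq; field. }
  destruct E as [_ E]. unfold g3, g1, herm in E; simpl in E.
  apply (f_equal (fun A => re (a11 A))) in E. simpl in E.
  pose proof PI_RGT_0. lra.
Qed.
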